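(* Let $\lambda,\lambda'\in\mathbb{C}^*$, $\alpha,\alpha'\in\mathbb{C}$, $t,t'\in\{1,-1\}$. If $\alpha\neq\alpha'$ or $t\neq t'$, then $\mathcal{M}_t(\lambda,\alpha)\not\cong\mathcal{M}_{t'}(\lambda',\alpha')$ as $\mathcal{T}$-modules.
   Context: The twisted $N=2$ superconformal algebra $\mathcal{T}$ is the Lie superalgebra over $\mathbb{C}$ with basis $\{L_m, I_r, G_p\mid m\in\mathbb{Z}, r\in\frac12+\mathbb{Z}, p\in\frac12\mathbb{Z}\}$, even part spanned by the $L_m,I_r$, odd part by the $G_p$, only nonzero brackets $[L_m,L_n]=(m-n)L_{m+n}$, $[L_m,I_r]=-rI_{m+r}$, $[L_m,G_p]=(\frac m2-p)G_{m+p}$, $[I_r,G_p]=G_{r+p}$, $[G_p,G_q]=(-1)^{2p}2L_{p+q}$ if $p+q\in\mathbb{Z}$, $[G_p,G_q]=(-1)^{2p+1}(p-q)I_{p+q}$ if $p+q\in\frac12+\mathbb{Z}$. For $p\in\frac12\mathbb{Z}$, $\lambda^p$ means $(\lambda^{1/2})^{2p}$ for a fixed square root. For $\lambda\in\mathbb{C}^*,\alpha\in\mathbb{C},t=\pm1$, $\mathcal{M}_t(\lambda,\alpha)$ is the $\mathbb{Z}_2$-graded space $\mathbb{C}[\partial^2]\oplus\partial\mathbb{C}[\partial^2]$ ($\partial$ a formal variable; even part $\mathbb{C}[\partial^2]$, odd part $\partial\mathbb{C}[\partial^2]$) with action ($m\in\mathbb{Z}$, $r\in\frac12+\mathbb{Z}$,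 $p\in\frac12\mathbb{Z}$): $L_mf(\partial^2)=\lambda^m(\partial^2+m\alpha)f(\partial^2+m)$, $L_m\partial f(\partial^2)=\lambda^m(\partial^2+m(\alpha+\frac12))\partial f(\partial^2+m)$, $I_rf(\partial^2)=-2t^{2r}\lambda^{r}\alpha f(\partial^2+r)$, $I_r\partial f(\partial^2)=t^{2r}\lambda^{r}(1-2\alpha)\partial f(\partial^2+r)$, $G_pf(\partial^2)=t^{2p}\lambda^p\partial f(\partial^2+p)$, $G_p\partial f(\partial^2)=(-t)^{2p}\lambda^p(\partial^2+2p\alpha)f(\partial^2+p)$. *)

(* Defs.v *)
From HB Require Import structures.
From mathcomp Require Import all_boot all_order all_algebra.
From mathcomp Require Import complex.
From mathcomp Require Import reals.
Set Implicit Arguments. Unset Strict Implicit. Unset Printing Implicit Defensive.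
Import Order.TTheory GRing.Theory Num.Theory.
Local Open Scope ring_scope.

(* Basis of the twisted N=2 superconformal algebra T, with doubled indices:
   TL m      = L_m            (m in Z)
   TI n      = I_(n + 1/2)    (n in Z, so r = n + 1/2 ranges over 1/2 + Z)
   TG k      = G_(k/2)        (k in Z, so p = k/2 ranges over (1/2)Z)     *)
Variant Tbasis := TL of int | TI of int | TG of int.

Section Module.
Variable C : fieldType.

(* Elements of M_t(lam,alpha) = C[d^2] (+) d C[d^2]: the pair (f, g) stands
   for f(d^2) + d g(d^2); f is the even part, g the odd part. *)
Definition Mspace := ({poly C} * {poly C})%type.

Definition pshift (c : C) (f : {poly C}) : {poly C} := f \Po ('X + c%:P).

Definition half : C := 2%:R^-1.

(* The action of the basis element on M_t(lam, alpha), where mu = lam^(1/2)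
   is the fixed square root, so lam^p = mu^(2p) (integer power). *)
Definition Mact (mu alpha t : C) (b : Tbasis) (v : Mspace) : Mspace :=
  let f := v.1 in let g := v.2 in
  match b with
  | TL m =>
      (mu ^ (2 * m) *: (('X + (m%:~R * alpha)%:P) * pshift m%:~R f),
       mu ^ (2 * m) *: (('X + (m%:~R * (alpha + half))%:P) * pshift m%:~R g))
  | TI n =>
      let r := n%:~R + half in
      let c := t ^ (2 * n + 1) * mu ^ (2 * n + 1) in
      ((- 2%:R * c * alpha) *: pshift r f,
       (c * (1 - 2%:R * alpha)) *: pshift r g)
  | TG k =>
      let p := k%:~R * half in
      (((- t) ^ k * mu ^ k) *: (('X + (k%:~R * alpha)%:P) * pshift p g),
       (t ^ k * mu ^ k) *: pshift p f)
  end.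

(* Isomorphism of T-modules: an even (parity-preserving) linear bijection
   commuting with the action of every basis element (hence of all of T). *)
Definition lin_poly (h : {poly C} -> {poly C}) : Prop :=
  forall (a : C) (u v : {poly C}), h (a *: u + v) = a *: h u + h v.

Definition T_isomorphic (A B : Tbasis -> Mspace -> Mspace) : Prop :=
  exists (h0 h1 : {poly C} -> {poly C}),
    [/\ lin_poly h0, lin_poly h1, bijective h0, bijective h1 &
        forall (b : Tbasis) (v : Mspace),
          (h0 (A b v).1, h1 (A b v).2) = B b (h0 v.1, h1 v.2)].
End Module.

(* Main.v *)
Require Import Defs.
From HB Require Import structures.
From mathcomp Require Import all_boot all_order all_algebra.
From mathcomp Require Import complex.
From mathcomp Require Import reals.
From mathcomp Require Import zify ring.
Import Order.TTheory GRing.Theory Num.Theory.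
Local Open Scope ring_scope.

Section S.
Variable C : fieldType.

Lemma L0e mu alpha t (f g : {poly C}) : (Mact mu alpha t (TL 0) (f, g)).1 = 'X * f.
Proof. by rewrite /Mact /pshift /= mulr0 expr0z scale1r mulr0z mul0r !addr0 comp_polyXr. Qed.
Lemma L0o mu alpha t (f g : {poly C}) : (Mact mu alpha t (TL 0) (f, g)).2 = 'X * g.
Proof. by rewrite /Mact /pshift /= mulr0 expr0z scale1r mulr0z mul0r !addr0 comp_polyXr. Qed.

Lemma lin0 (h : {poly C} -> {poly C}) : lin_poly h -> h 0 = 0.
Proof.
move=> l; have := l 1 0 0; rewrite !scale1r addr0 => /(congr1 (fun x => x - h 0)).
by rewrite subrr addrK.
Qed.

Lemma scal_form (h : {poly C} -> {poly C}) : lin_poly h -> (forall f, h ('X * f) = 'X * h f) ->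
  forall f, h f = f * h 1.
Proof.
move=> l hX f; elim/poly_ind: f => [|p c IH]; first by rewrite lin0 // mul0r.
have -> : p * 'X + c%:P = 1 *: ('X * p) + c *: 1 by rewrite scale1r mulrC -mul_polyC mulr1.
have hc : h (c *: 1) = c *: h 1 by rewrite -[c *: 1]addr0 l lin0 // addr0.
rewrite l hc hX IH scale1r -mul_polyC mulrDl mulrA (mulrC 'X p) mul_polyC scale1r.
by rewrite -scalerAl mul1r.
Qed.

Lemma const_form (h : {poly C} -> {poly C}) : lin_poly h -> bijective h -> (forall f, h ('X * f) = 'X * h f) ->
  exists2 a : C, a != 0 & forall f, h f = a *: f.
Proof.
move=> l [g hg gh] hX.
have F := scal_form h l hX.
have e : g 1 * h 1 = 1 by rewrite -F gh.
have nz1 : h 1 != 0 by apply/eqP => z; move: e; rewrite z mulr0 => /eqP; rewrite eq_sym oner_eq0.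
have nzg : g 1 != 0 by apply/eqP => z; move: e; rewrite z mul0r => /eqP; rewrite eq_sym oner_eq0.
have s : size (h 1) = 1%N.
  have := size_mul nzg nz1; rewrite e size_poly1.
  have := size_poly_gt0 (g 1); have := size_poly_gt0 (h 1).
  rewrite nz1 nzg /=. move: (size (g 1)) (size (h 1)) => m n a b c; rewrite -subn1 in c; lia.
have s1 : (size (h 1%R) <= 1)%N by rewrite s.
exists (h 1)`_0.
  move: nz1; apply: contra => /eqP z; apply/eqP; by rewrite (size1_polyC s1) z.
move=> f; rewrite F.
by rewrite {1}(size1_polyC s1) mulrC mul_polyC.
Qed.
End S.

Lemma ps1 (C : fieldType) (r c : C) : pshift r (c *: 1) = c *: 1.
Proof. by rewrite /pshift alg_polyC comp_polyC. Qed.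
Lemma ps1' (C : fieldType) (r : C) : pshift r 1 = 1.
Proof. by rewrite /pshift -polyC1 comp_polyC. Qed.
Lemma cf1 (C : fieldType) (d c : C) : (('X + d%:P) * (c *: 1))`_1 = c.
Proof. rewrite alg_polyC mulrC coefCM coefD coefX coefC /=. by rewrite addr0 mulr1. Qed.
Lemma cf0 (C : fieldType) (c : C) : (c *: (1 : {poly C}))`_0 = c.
Proof. by rewrite coefZ coef1 mulr1. Qed.

Theorem corollary6p6 (R : realType) (sq : R[i] -> R[i])
  (hsq : forall z : R[i], sq z ^+ 2 = z)
  (lam lam' alpha alpha' t t' : R[i]) :
  lam != 0 -> lam' != 0 ->
  (t = 1 \/ t = -1) -> (t' = 1 \/ t' = -1) ->
  (alpha <> alpha' \/ t <> t') ->
  ~ T_isomorphic (Mact (sq lam) alpha t) (Mact (sq lam') alpha' t').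
Proof.
move=> lnz lnz' ht ht' hne [h0 [h1 [l0 l1 b0 b1 H]]].
have hX0 : forall f, h0 ('X * f) = 'X * h0 f.
  move=> f; have := congr1 fst (H (TL 0) (f, 0)); cbn [fst]; by rewrite !L0e.
have hX1 : forall g, h1 ('X * g) = 'X * h1 g.
  move=> g; have := congr1 snd (H (TL 0) (0, g)); cbn [snd]; by rewrite !L0o.
have [a0 a0nz ha] := const_form _ h0 l0 b0 hX0.
have [a1 a1nz hb] := const_form _ h1 l1 b1 hX1.
have := congr1 fst (H (TL 1) (1, 0)); cbn [fst]; rewrite !ha /= !ps1 ps1'.
move=> E; have := congr1 (fun p : {poly R[i]} => p`_1) E; clear E.
rewrite !mulr1 !mul1r !coefZ cf1 coefD coefX coefC /= addr0 mulr1.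
have hsq2 : forall z, sq z ^ 2%:Z = z := hsq.
move=> E0; have E1 : a0 * sq lam ^+ 2 = sq lam' ^+ 2 * a0 := E0; rewrite !hsq in E1; clear E0.
have elam : lam = lam'.
  apply: (mulIf a0nz); by rewrite mulrC E1.
have emu : sq lam' = sq lam by rewrite elam.
have munz : sq lam != 0.
  by apply: contra lnz => /eqP z; rewrite -(hsq lam) z expr2 mulr0.
have := congr1 fst (H (TI 0) (1, 0)); cbn [fst]; rewrite !ha /= !ps1 ps1'.
rewrite emu !mulr0 !add0r !expr1z !scalerA => E; have := congr1 (fun p : {poly R[i]} => p`_0) E; clear E.
rewrite !cf0 => E2.
have := congr1 snd (H (TI 0) (0, 1)); cbn [snd]; rewrite !hb /= !ps1 ps1'.
rewrite emu !mulr0 !add0r !expr1z !scalerA => E; have := congr1 (fun p : {poly R[i]} => p`_0) E; clear E.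
rewrite !cf0 => E3.
have e2 : a0 * 2 * (t * sq lam * alpha - t' * sq lam * alpha') = 0.
  transitivity (-(a0 * (-2 * (t * sq lam) * alpha) - (-2 * (t' * sq lam) * alpha') * a0)).
    ring.
  by rewrite E2 subrr oppr0.
have e3 : a1 * ((t * sq lam - t' * sq lam) - 2 * (t * sq lam * alpha - t' * sq lam * alpha')) = 0.
  transitivity (a1 * (t * sq lam * (1 - 2 * alpha)) - (t' * sq lam * (1 - 2 * alpha')) * a1).
    ring.
  by rewrite E3 subrr.
have two : (2 : R[i]) != 0 by rewrite pnatr_eq0.
move: e2 => /eqP; rewrite !mulf_eq0 (negbTE a0nz) (negbTE two) /= => /eqP e2.
move: e3 => /eqP; rewrite e2 mulr0 subr0 !mulf_eq0 (negbTE a1nz) /= subr_eq0.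
rewrite -!(mulrC (sq lam)) => /eqP/(mulfI munz) ett.
have tnz : t != 0 by case: ht => ->; rewrite ?oppr_eq0 oner_eq0.
move: e2 => /eqP; rewrite subr_eq0 -ett -!mulrA => /eqP/(mulfI tnz)/(mulfI munz) eal.
by case: hne.
Qed.
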